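(* Let $K,A,B$ be sets and let $\mathrm{null}$ be an element not in $A\cup B$. Let $S$ be the set of finite sets $s$ of triples $(k,a,b)$ with $k\in K$, $a\in A\cup\{\mathrm{null}\}$, $b\in B\cup\{\mathrm{null}\}$, such that no two distinct triples of $s$ have the same first component and no triple has $a=b=\mathrm{null}$. Let $V$ (resp. $W$) be the set of finite sets of pairs in $K\times A$ (resp. $K\times B$) in which no two distinct pairs have the same first component. Define $f:S\to V$, $f(s)=\{(k,a):(k,a,b)\in s,\ a\neq\mathrm{null}\}$ and $c:S\to W$, $c(s)=\{(k,b):(k,a,b)\in s,\ b\neq\mathrm{null}\}$. Then: (1) the map $s\mapsto (f(s),c(s))$ is a bijection $S\to V\times W$; (2) for every complete set $U$ of updates on $V$, setting $T(u)(s)$ to be the unique $s'\in S$ with $f(s')=u(f(s))$ and $c(s')=c(s)$ defines a translator $T$ for $f$; (3) for this $T$, $s\equiv s'$ implies $c(s)=c(s')$; and if moreover for all $x,y\in V$ there is $u\in U$ with $u(x)=y$, then $s\equiv s'$ if and only if $c(s)=c(s')$, so the classes of $S/{\equiv}$ are in one-to-one correspondence with $W$ (the states of the projection onto the $K$ and $B$ columns, restricted to non-null $B$).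
   Context: This models a table with key column $K$ and columns $A,B$, the view being the projection onto $(K,A)$ restricted to rows with non-null $A$. The translator $T$ in (2) corresponds to the row-level strategy: inserting $(k,a)$ in the view sets the $A$ column of the base row with key $k$ to $a$ if that row exists, and otherwise inserts $(k,a,\mathrm{null})$; deleting $(k,a)$ from the view sets the $A$ column of that base row to $\mathrm{null}$, deleting the base row if its $B$ column is also $\mathrm{null}$. Definitions: for a surjective map $f:S\to V$, a set $U$ of maps $V\to V$ is a complete set of updates if (a) $u,v\in U$ implies $v\circ u\in U$, and (b) for every $u\in U$ and $x\in V$ there is $w\in U$ with $w(u(x))=x$. A map $t:S\to S$ is a translation of $u:V\to V$ if $f\circ t=u\circ f$ and $u(f(s))=f(s)$ implies $t(s)=s$ for all $s\in S$. A translator for $f$ (with respect to a complete set $U$) assigns to each $u\in U$ a translation $T(u)$ of $u$ such that $T(u\circ v)=T(u)\circ T(v)$. The induced equivalence on $S$ is: $s\equiv s'$ iff $s=T(u)(s')$ for some $u\in U$. *)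

(* Defs.v *)
From mathcomp Require Import all_boot.
From mathcomp Require Import boolp classical_sets functions cardinality.
Set Implicit Arguments. Unset Strict Implicit. Unset Printing Implicit Defensive.
Local Open Scope classical_set_scope.

Definition complete_updates (V : Type) (U : set (V -> V)) : Prop :=
  (forall u v, U u -> U v -> U (v \o u)) /\
  (forall u x, U u -> exists2 w, U w & w (u x) = x).

Definition translation (S V : Type) (f : S -> V) (u : V -> V) (t : S -> S) : Prop :=
  (forall s, f (t s) = u (f s)) /\ (forall s, u (f s) = f s -> t s = s).

Definition translator (S V : Type) (f : S -> V) (U : set (V -> V))
  (T : (V -> V) -> S -> S) : Prop :=
  (forall u, U u -> translation f u (T u)) /\
  (forall u v, U u -> U v -> T (u \o v) = T u \o T v).

Definition tequiv (S V : Type) (U : set (V -> V)) (T : (V -> V) -> S -> S)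
  (s s' : S) : Prop := exists2 u, U u & s = T u s'.

Section Table.
Variables (K A B : Type).

(* null is modelled by None : the column domains are option A, option B *)
Definition triple := (K * option A * option B)%type.

Definition is_state (s : set triple) : Prop :=
  [/\ finite_set s,
      (forall t t', s t -> s t' -> t.1.1 = t'.1.1 -> t = t') &
      (forall k, ~ s (k, None, None))].

Definition is_kv (X : Type) (v : set (K * X)) : Prop :=
  finite_set v /\ (forall p q, v p -> v q -> p.1 = q.1 -> p = q).

Definition Sst := {s : set triple | is_state s}.
Definition Vst := {v : set (K * A) | is_kv v}.
Definition Wst := {w : set (K * B) | is_kv w}.

Definition f_raw (s : set triple) : set (K * A) :=
  [set p | exists b, s (p.1, Some p.2, b)].
Definition c_raw (s : set triple) : set (K * B) :=
  [set p | exists a, s (p.1, a, Some p.2)].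

Lemma f_raw_kv s : is_state s -> is_kv (f_raw s).
Proof.
case=> fs uniq _; split.
  pose h (t : triple) : option (K * A) :=
    if t.1.2 is Some a then Some (t.1.1, a) else None.
  have -> : f_raw s = Some @^-1` (h @` s).
    apply/seteqP; split=> [[k a] [b sb]|[k a] [t st]].
      by exists (k, Some a, b).
    rewrite /h; case: t st => [[k' [a'|] b']] st //= [<- <-]; by exists b'.
  apply: finite_preimage; last exact: finite_image.
  by move=> x y _ _ [].
move=> [k a] [k' a'] [b sb] [b' sb'] /= ek; subst k'.
by have [->] := uniq _ _ sb sb' erefl.
Qed.

Lemma c_raw_kv s : is_state s -> is_kv (c_raw s).
Proof.
case=> fs uniq _; split.
  pose h (t : triple) : option (K * B) :=
    if t.2 is Some b then Some (t.1.1, b) else None.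
  have -> : c_raw s = Some @^-1` (h @` s).
    apply/seteqP; split=> [[k b] [a sa]|[k b] [t st]].
      by exists (k, a, Some b).
    rewrite /h; case: t st => [[k' a'] [b'|]] st //= [<- <-]; by exists a'.
  apply: finite_preimage; last exact: finite_image.
  by move=> x y _ _ [].
move=> [k b] [k' b'] [a sa] [a' sa'] /= ek; subst k'.
by have [_ ->] := uniq _ _ sa sa' erefl.
Qed.

Definition fmap (s : Sst) : Vst := exist _ (f_raw (proj1_sig s)) (f_raw_kv (proj2_sig s)).
Definition cmap (s : Sst) : Wst := exist _ (c_raw (proj1_sig s)) (c_raw_kv (proj2_sig s)).

End Table.

(* Main.v *)
Require Import Defs.
From mathcomp Require Import all_boot.
From mathcomp Require Import boolp classical_sets functions cardinality.
Set Implicit Arguments. Unset Strict Implicit. Unset Printing Implicit Defensive.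
Local Open Scope classical_set_scope.

Section Aux.
Variables (K A B : Type).

Lemma sig_eqP (T : Type) (P : T -> Prop) (x y : {t | P t}) :
  proj1_sig x = proj1_sig y -> x = y.
Proof. case: x y => [x px] [y py] /= exy; subst y; congr exist; exact: Prop_irrelevance. Qed.

Definition optrel (X : Type) (v : set (K * X)) (k : K) (o : option X) : Prop :=
  match o with Some x => v (k, x) | None => ~ exists x, v (k, x) end.

Definition comb (v : set (K * A)) (w : set (K * B)) : set (triple K A B) :=
  fun t => [/\ optrel v t.1.1 t.1.2, optrel w t.1.1 t.2 & (t.1.2 <> None \/ t.2 <> None)].

Lemma optrel_uniq (X : Type) (v : set (K * X)) k o o' :
  is_kv v -> optrel v k o -> optrel v k o' -> o = o'.
Proof.
case=> _ u; case: o => [x|]; case: o' => [x'|] //= h h'.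
- by have [->] := u _ _ h h' erefl.
- by case: h'; exists x.
- by case: h; exists x'.
Qed.

Lemma comb_state v w : is_kv v -> is_kv w -> is_state (comb v w).
Proof.
move=> hv hw; split.
- pose X := (fun q : K * A => (q.1, Some q.2)) @` v `|` (fun q : K * B => (q.1, @None A)) @` w.
  pose Y := (fun q : K * B => (q.1, Some q.2)) @` w `|` (fun q : K * A => (q.1, @None B)) @` v.
  apply: (@sub_finite_set _ _ [set (fun p q => (p.1, p.2, q.2) : triple K A B) x y | x in X & y in Y]).
    move=> [[k oa] ob] [/= ha hb hn].
    exists (k, oa); last exists (k, ob) => //.
      case: oa ha hn => [a|] ha hn; first by left; exists (k, a).
      case: ob hb hn => [b|] hb [] //= _; by right; exists (k, b).
    case: ob hb hn => [b|] hb hn; first by left; exists (k, b).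
    case: oa ha hn => [a|] ha [] //= _; by right; exists (k, a).
  apply: finite_image2; rewrite finite_setU; split; apply: finite_image;
    by [case: hv | case: hw].
- move=> [[k oa] ob] [[k' oa'] ob'] [/= a1 b1 _] [/= a2 b2 _] ek; subst k'.
  by rewrite (optrel_uniq hv a1 a2) (optrel_uniq hw b1 b2).
- by move=> k [/= _ _ []] [].
Qed.

Lemma f_comb v w : is_kv v -> f_raw (comb v w) = v.
Proof.
move=> hv; rewrite predeqE => -[k a]; split.
  by case=> b [].
move=> hka; have [[b hb]|nb] := pselect (exists b, w (k, b)).
  by exists (Some b); split => //; left.
by exists None; split => //; left.
Qed.

Lemma c_comb v w : is_kv w -> c_raw (comb v w) = w.
Proof.
move=> hw; rewrite predeqE => -[k b]; split.
  by case=> a [].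
move=> hkb; have [[a ha]|na] := pselect (exists a, v (k, a)).
  by exists (Some a); split => //; right.
by exists None; split => //; right.
Qed.

Lemma comb_fc s : is_state s -> s = comb (f_raw s) (c_raw s).
Proof.
case=> fs u nn; rewrite predeqE => -[[k oa] ob]; split.
  move=> st; split => /=.
  - case: oa st => [a|] st; first by exists ob.
    case=> a [b' sb']; by have [] := u _ _ st sb' erefl.
  - case: ob st => [b|] st; first by exists oa.
    case=> b [a' sa']; by have [] := u _ _ st sa' erefl.
  - by case: oa st => [a|] st; [left | case: ob st => [b|] st; [right|case: (nn k)]].
case=> /=; case: oa => [a|]; case: ob => [b|] //=.
- move=> [b1 s1] [a2 s2] _; have := congr1 snd (u _ _ s1 s2 erefl); move=> /= e; by rewrite -e.
- move=> [b1 s1] nb _; case: b1 s1 => [b'|] s1 //.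
  by case: nb; exists b'; exists (Some a).
- move=> na [a2 s2] _; case: a2 s2 => [a'|] s2 //.
  by case: na; exists a'; exists (Some b).
- by move=> _ _ [].
Qed.

Definition gmap (p : Vst K A * Wst K B) : Sst K A B :=
  exist _ (comb (proj1_sig p.1) (proj1_sig p.2))
    (comb_state (proj2_sig p.1) (proj2_sig p.2)).

Lemma bij_part : bijective (fun s : Sst K A B => (fmap s, cmap s)).
Proof.
exists gmap.
  move=> s; apply: sig_eqP => /=; symmetry; exact: comb_fc (proj2_sig s).
move=> [v w]; congr pair; apply: sig_eqP => /=.
  exact: f_comb (proj2_sig v).
exact: c_comb (proj2_sig w).
Qed.

Lemma inj_part (s s' : Sst K A B) : fmap s = fmap s' -> cmap s = cmap s' -> s = s'.
Proof.
move=> e1 e2; apply: (bij_inj bij_part) => /=; by rewrite e1 e2.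
Qed.

End Aux.

Theorem mainTheorem4 (K A B : Type) :
  (* (1) s |-> (f s, c s) is a bijection S -> V x W *)
  bijective (fun s : Sst K A B => (fmap s, cmap s)) /\
  (* (2),(3) for every complete set U of updates on V *)
  (forall U : set (Vst K A -> Vst K A), complete_updates U ->
    (* T(u)(s) = the unique s' with f s' = u (f s) and c s' = c s exists *)
    (exists T : (Vst K A -> Vst K A) -> Sst K A B -> Sst K A B,
       forall u s, fmap (T u s) = u (fmap s) /\ cmap (T u s) = cmap s) /\
    (forall T : (Vst K A -> Vst K A) -> Sst K A B -> Sst K A B,
       (forall u s, fmap (T u s) = u (fmap s) /\ cmap (T u s) = cmap s) ->
       translator (@fmap K A B) U T /\
       (forall s s', tequiv U T s s' -> cmap s = cmap s') /\
       ((forall x y : Vst K A, exists2 u, U u & u x = y) ->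
          forall s s', tequiv U T s s' <-> cmap s = cmap s'))).
Proof.
split; first exact: bij_part.
move=> U _; split.
  exists (fun u s => gmap (u (fmap s), cmap s)) => u s.
  have := f_comb (proj1_sig (cmap s)) (proj2_sig (u (fmap s))).
  have := c_comb (proj1_sig (u (fmap s))) (proj2_sig (cmap s)).
  by move=> e2 e1; split; apply: sig_eqP.
move=> T H; split; [split|split].
- move=> u _; split; first by move=> s; case: (H u s).
  move=> s e; case: (H u s) => e1 e2; apply: inj_part; by rewrite ?e1 ?e2.
- move=> u v _ _; apply: funext => s /=; apply: inj_part.
    by case: (H (u \o v) s) => -> _; case: (H u (T v s)) => -> _; case: (H v s) => -> _.
  by case: (H (u \o v) s) => _ ->; case: (H u (T v s)) => _ ->; case: (H v s) => _ ->.
- by move=> s s' [u _ ->]; case: (H u s') => _ ->.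
move=> hU s s'; split; first by move=> [u _ ->]; case: (H u s') => _ ->.
move=> e; have [u Uu eu] := hU (fmap s') (fmap s).
exists u => //; case: (H u s') => e1 e2; apply: inj_part; by rewrite ?e1 ?e2.
Qed.
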